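(* Let $G$ be a cubic graph and $F$ the edge set of a spanning tree of $G$. Then every twisted graph $T=(\vec G,G,<,A)$, with $<$ a total order on the edge set, has a positive sequence on $F$.
   Context: Signed sets on a finite set $E$: pairs $X=(X^+,X^-)$ of disjoint subsets, $X(e)=+1,-1,0$ according as $e\in X^+$, $e\in X^-$, or neither; support $\underline X=X^+\cup X^-$. Conformal: no $e$ with $X(e)=-Y(e)\ne0$; composition $(X\circ Y)(e)=X(e)$ if $X(e)\ne0$, else $Y(e)$. For a total order $<$ on $E$, $\mathcal C(<)=\{(\{e_1,e_3\},\{e_2\}),(\{e_2\},\{e_1,e_3\}):e_1<e_2<e_3\}$ (circuits of the rank 2 oriented matroid $\mathcal M(<)$; vectors are compositions of pairwise conformal families of circuits); for a partial order $\prec$, $\mathcal C(\prec)=\bigcap_{<\supseteq\prec}\mathcal C(<)$. For a directed graph $\vec G=(V,\vec E)$ (no loops, parallel or antiparallel edges), underlying simple graph $G=(V,E)$, a strong map $\mathcal M^*(\vec G)\to\mathcal M(<)$ means every signed minimal cut $(\{(u,w):u\in S,w\notin S\},\{(u,w):w\in S,u\notin S\})$ ($S$, $V\setminus S$ inducing connected subgraphs) is a vector of $\mathcal M(<)$; $C^*_v=(\{(u,v)\in\vec E\},\{(v,u)\in\vec E\})$. A twisted graph $T=(\vec G,G,\prec,A)$: $\prec$ a partial order on $E$, $G$ three-edge-connected, $A\subset\mathcal C(\prec)$, a strong map $\mathcal M^*(\vec G)\to\mathcal M(<)$ for every total $<\supseteq\prec$, and a partition $A=\bigsqcup_v A_v$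 with members of $A_v$ pairwise conformal and composing to $C^*_v$. A positive sequence for $T$ on $F$ is an enumeration $A=\{a_1,\dots,a_m\}$ ($m=|A|$) and an enumeration $F=\{f_2,\dots,f_m\}\subset E$ of distinct edges such that for each $2\le j\le m$: $a_j(f_j)\ne0$; $a_i(f_j)=0$ for all $i>j$; and $a_i(f_j)\in\{0,-a_j(f_j)\}$ for all $i<j$. *)

(* Defs.v *)
From mathcomp Require Import all_boot all_order all_algebra.
Set Implicit Arguments. Unset Strict Implicit. Unset Printing Implicit Defensive.

Section TwistedGraphs.
Variables (V : finType) (D : rel V).

(* Directed edges (u,w) of the digraph ~G; they are in bijection with the
   edges {u,w} of the underlying simple graph G (no antiparallel edges). *)
Definition dedge : finType := {p : V * V | D p.1 p.2}.

(* Signed sets on the edge set: X = (X^+, X^-). *)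
Definition sset : finType := ({set dedge} * {set dedge})%type.

Definition is_signed_set (X : sset) : bool := [disjoint X.1 & X.2].

Definition sgn (X : sset) (e : dedge) : int :=
  if e \in X.1 then 1%R else if e \in X.2 then (-1)%R else 0%R.

Definition zero_sset : sset := (set0, set0).

Definition conformal (X Y : sset) : bool :=
  [forall e, ~~ ((sgn X e != 0%R) && (sgn X e == - sgn Y e)%R)].

(* (X o Y)(e) = X(e) if X(e) <> 0, else Y(e). *)
Definition compose (X Y : sset) : sset :=
  (X.1 :|: (Y.1 :\: (X.1 :|: X.2)), X.2 :|: (Y.2 :\: (X.1 :|: X.2))).

Definition compose_seq (s : seq sset) : sset := foldr compose zero_sset s.

Definition strict_partial_order (R : rel dedge) : Prop :=
  irreflexive R /\ transitive R.
Definition strict_total_order (R : rel dedge) : Prop :=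
  strict_partial_order R /\ forall x y, x != y -> R x y || R y x.
Definition extends (prec lt : rel dedge) : Prop := forall x y, prec x y -> lt x y.

Definition circuits (lt : rel dedge) : {set sset} :=
  [set X | [exists e1, exists e2, exists e3,
     [&& lt e1 e2, lt e2 e3 &
       (X == ([set e1; e3], [set e2])) || (X == ([set e2], [set e1; e3]))]]].

Definition in_Cprec (prec : rel dedge) (X : sset) : Prop :=
  forall lt, strict_total_order lt -> extends prec lt -> X \in circuits lt.

Definition is_vector (lt : rel dedge) (X : sset) : Prop :=
  exists s : seq sset, [/\ all (fun Y => Y \in circuits lt) s,
                          pairwise conformal s & X = compose_seq s].

Definition adjG : rel V := fun u w => D u w || D w u.

Definition adjK (K : {set dedge}) : rel V :=
  fun u w => [exists e in K, (val e == (u, w)) || (val e == (w, u))].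

Definition induces_connected (S : {set V}) : Prop :=
  S != set0 /\
  forall u w, u \in S -> w \in S ->
    connect (fun x y => [&& x \in S, y \in S & adjG x y]) u w.

Definition signed_cut (S : {set V}) : sset :=
  ([set e : dedge | ((val e).1 \in S) && ((val e).2 \notin S)],
   [set e : dedge | ((val e).2 \in S) && ((val e).1 \notin S)]).

Definition strong_map (lt : rel dedge) : Prop :=
  forall S : {set V}, induces_connected S -> induces_connected (~: S) ->
    is_vector lt (signed_cut S).

Definition Cstar (v : V) : sset :=
  ([set e : dedge | (val e).2 == v], [set e : dedge | (val e).1 == v]).

Definition spanning_connected (K : {set dedge}) : Prop :=
  forall u w, connect (adjK K) u w.

Definition three_edge_connected : Prop :=
  forall R : {set dedge}, #|R| <= 2 -> spanning_connected (~: R).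

Definition acyclic (K : {set dedge}) : Prop :=
  forall s : seq V, 3 <= size s -> uniq s -> ~~ cycle (adjK K) s.

Definition spanning_tree (K : {set dedge}) : Prop :=
  spanning_connected K /\ acyclic K.

Definition cubic : Prop :=
  forall v : V, #|[set e : dedge | ((val e).1 == v) || ((val e).2 == v)]| = 3.

Definition simple_digraph : Prop :=
  irreflexive D /\ forall u w, D u w -> ~~ D w u.

Definition twisted_graph (prec : rel dedge) (A : {set sset}) : Prop :=
  [/\ strict_partial_order prec,
      three_edge_connected,
      (forall X, X \in A -> in_Cprec prec X),
      (forall lt, strict_total_order lt -> extends prec lt -> strong_map lt) &
      exists Ap : V -> {set sset},
        [/\ A = \bigcup_(v : V) Ap v,
            (forall u v, u != v -> [disjoint Ap u & Ap v]),
            (forall v X Y, X \in Ap v -> Y \in Ap v -> conformal X Y) &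
            (forall v, compose_seq (enum (Ap v)) = Cstar v)]].

(* positive sequence for T on F: a = [:: a_1; ...; a_m], f = [:: f_2; ...; f_m]
   (so f_j is at 0-based index j-2 of f, and a_j at 0-based index j-1 of a). *)
Definition positive_sequence (A : {set sset}) (F : {set dedge}) : Prop :=
  exists (a : seq sset) (f : seq dedge),
    [/\ (uniq a /\ [set x in a] = A), (uniq f /\ [set x in f] = F),
        size f = (size a).-1 &
        forall j : 'I_(size f),
          let fj := tnth (in_tuple f) j in
          let aj := nth zero_sset a j.+1 in
          [/\ sgn aj fj != 0%R,
              (forall i, j.+1 < i < size a -> sgn (nth zero_sset a i) fj = 0%R) &
              (forall i, i < j.+1 ->
                 sgn (nth zero_sset a i) fj \in [:: 0%R; (- sgn aj fj)%R])]].

End TwistedGraphs.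

(* Main.v *)
Require Import Defs.
From mathcomp Require Import all_boot all_order all_algebra.
From mathcomp Require Import zify.
Set Implicit Arguments. Unset Strict Implicit. Unset Printing Implicit Defensive.
Import GRing.Theory.

Section S.
Variables (V : finType) (D : rel V).
Local Notation dedge := (dedge D).
Local Notation sset := (sset D).

Lemma sgn_cases (X : sset) e :
  [\/ sgn X e = 1%R, sgn X e = (-1)%R | sgn X e = 0%R].
Proof. by rewrite /sgn; case: ifP => _; [constructor 1|case: ifP => _; [constructor 2|constructor 3]]. Qed.

Lemma sgn_compose (X Y : sset) e :
  sgn (compose X Y) e = if sgn X e != 0%R then sgn X e else sgn Y e.
Proof.
rewrite /sgn /compose /= !inE.
by case: (e \in X.1); case: (e \in X.2); case: (e \in Y.1); case: (e \in Y.2).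
Qed.

Lemma sgn_compose_seq (s : seq sset) X e :
  X \in s -> pairwise (@conformal V D) s -> sgn X e != 0%R ->
  sgn (compose_seq s) e = sgn X e.
Proof.
elim: s => // Y s IH; rewrite inE pairwise_cons => XYs /andP[allY pw] nz /=.
rewrite sgn_compose.
case: (eqVneq X Y) => [<-|neXY]; first by rewrite nz.
have Xs : X \in s by move: XYs; rewrite (negbTE neXY).
have /forallP/(_ e) := allP allY X Xs.
case: ifP => [nzY|/negbFE/eqP zY]; last by move=> _; rewrite IH.
move: nzY nz; case: (sgn_cases Y e) => ->; case: (sgn_cases X e) => -> //.
Qed.

Lemma pairwise_of (r : rel sset) (s : seq sset) :
  (forall x y, x \in s -> y \in s -> r x y) -> pairwise r s.
Proof.
elim: s => // x s IH H; rewrite pairwise_cons; apply/andP; split.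
  by apply/allP => y ys; apply: H; rewrite inE ?eqxx // ys orbT.
by apply: IH => a b ha hb; apply: H; rewrite inE ?ha ?hb orbT.
Qed.

Lemma circuit_props (lt : rel dedge) X :
  strict_partial_order lt -> X \in circuits lt ->
  [disjoint X.1 & X.2] /\ #|X.1| + #|X.2| = 3.
Proof.
move=> [irr tr]; rewrite inE => /existsP[e1 /existsP[e2 /existsP[e3]]].
move=> /and3P[l12 l23 /orP[]/eqP->] /=.
  have n12 : e1 != e2 by apply/eqP=> h; move: l12; rewrite h irr.
  have n23 : e2 != e3 by apply/eqP=> h; move: l23; rewrite h irr.
  have n13 : e1 != e3 by apply/eqP=> h; move: (tr _ _ _ l12 l23); rewrite h irr.
  rewrite cards2 cards1 n13; split => //.
  by rewrite disjoint_sym disjoints1 !inE negb_or eq_sym n12 n23.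
have n12 : e1 != e2 by apply/eqP=> h; move: l12; rewrite h irr.
have n23 : e2 != e3 by apply/eqP=> h; move: l23; rewrite h irr.
have n13 : e1 != e3 by apply/eqP=> h; move: (tr _ _ _ l12 l23); rewrite h irr.
rewrite cards2 cards1 n13; split => //.
by rewrite disjoints1 !inE negb_or eq_sym n12 n23.
Qed.

Definition inc (v : V) : {set dedge} :=
  [set e : dedge | ((val e).1 == v) || ((val e).2 == v)].

Lemma Cstar_props (HD : simple_digraph D) (Hc : cubic D) v :
  [disjoint (Cstar D v).1 & (Cstar D v).2] /\ #|(Cstar D v).1| + #|(Cstar D v).2| = 3.
Proof.
have dis : [disjoint (Cstar D v).1 & (Cstar D v).2].
  rewrite /Cstar /= -setI_eq0; apply/eqP; apply: (iffLR (setP _ _)) => e; rewrite !inE.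
  case: eqP => [h2|] //=; case: eqP => [h1|] //=.
  have := valP e; rewrite h1 h2; case: HD => irr _; by rewrite irr.
split => //; rewrite -(Hc v) -cardsUI.
have -> : (Cstar D v).1 :&: (Cstar D v).2 = set0.
  by apply/eqP; rewrite setI_eq0.
rewrite cards0 addn0; apply: eq_card => e; rewrite !inE orbC.
by [].
Qed.

Lemma sign_eq_sets (X C : sset) :
  [disjoint X.1 & X.2] -> [disjoint C.1 & C.2] -> #|X.1| + #|X.2| = 3 ->
  #|C.1| + #|C.2| = 3 ->
  (forall e, sgn X e != 0%R -> sgn X e = sgn C e) -> X = C.
Proof.
move=> dX dC cX cC H.
have s1 : X.1 \subset C.1.
  apply/subsetP => e ex; have := H e; rewrite /sgn ex /= => /(_ isT).
  by case: ifP => // _; case: ifP.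
have s2 : X.2 \subset C.2.
  apply/subsetP => e ex; have ex1 := disjointFl dX ex.
  have := H e; rewrite /sgn ex ex1 /= => /(_ isT).
  by case: ifP => // _; case: ifP.
have l1 := subset_leq_card s1; have l2 := subset_leq_card s2.
have e1 : #|C.1| <= #|X.1| by lia.
have e2 : #|C.2| <= #|X.2| by lia.
case: X C {H dX dC cX cC} s1 s2 l1 l2 e1 e2 => X1 X2 [C1 C2] /= s1 s2 _ _ e1 e2.
have /eqP-> : X1 == C1 by rewrite eqEcard s1.
have /eqP-> : X2 == C2 by rewrite eqEcard s2.
by [].
Qed.

Lemma A_char (HD : simple_digraph D) (Hc : cubic D) (lt : rel dedge)
  (Hlt : strict_total_order lt) (A : {set sset}) (HT : twisted_graph lt A) X :
  X \in A <-> exists v, X = Cstar D v.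
Proof.
case: HT => _ _ HA _ [Ap [defA _ conf comp]].
have circ : forall v Y, Y \in Ap v -> Y \in circuits lt.
  move=> v Y YA; apply: (HA Y); last by [].
  - by rewrite defA; apply/bigcupP; exists v.
  - by [].
have eqC : forall v Y, Y \in Ap v -> Y = Cstar D v.
  move=> v Y YA; have [d3 c3] := circuit_props Hlt.1 (circ v Y YA).
  have [d3' c3'] := Cstar_props HD Hc v.
  apply: sign_eq_sets => // e nz; rewrite -(comp v).
  rewrite (sgn_compose_seq (X := Y)) //; first by rewrite mem_enum.
  by apply: pairwise_of => a b; rewrite !mem_enum; apply: conf.
have ne : forall v, Cstar D v \in Ap v.
  move=> v; case: (set_0Vmem (Ap v)) => [A0|[Y YA]]; last by rewrite -(eqC v Y YA).
  have := comp v; rewrite A0 enum_set0 /= => h.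
  have [_ c3] := Cstar_props HD Hc v; move: c3; rewrite -h /zero_sset /= !cards0.
  by [].
split.
  by rewrite defA => /bigcupP[v _ XA]; exists v; apply: eqC.
by move=> [v ->]; rewrite defA; apply/bigcupP; exists v.
Qed.

Lemma Cstar_inj (Hc : cubic D) : injective (Cstar D).
Proof.
move=> u v h.
have : 0 < #|inc u| by rewrite /inc (Hc u).
case/card_gt0P => e; rewrite inE => /orP[]/eqP h1.
  have : e \in (Cstar D u).2 by rewrite inE h1.
  by rewrite h inE h1 => /eqP.
have : e \in (Cstar D u).1 by rewrite inE h1.
by rewrite h inE h1 => /eqP.
Qed.

Definition adjE (u w : V) (e : dedge) := (val e == (u, w)) || (val e == (w, u)).

Lemma adjK_sym (K : {set dedge}) : symmetric (adjK K).
Proof. by move=> u w; apply: eq_existsb => e; rewrite orbC. Qed.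

Lemma adjK_mono (K K' : {set dedge}) : K \subset K' -> subrel (adjK K) (adjK K').
Proof.
move=> /subsetP sub u w /existsP[e /andP[eK h]]; apply/existsP; exists e.
by rewrite sub.
Qed.

Lemma edge_uniq (HD : simple_digraph D) e g u w :
  adjE u w e -> adjE u w g -> e = g.
Proof.
have ve := valP e; have vg := valP g.
case: HD => _ anti.
move=> /orP[]/eqP he /orP[]/eqP hg; try (by apply: val_inj; rewrite he hg);
  move: ve vg; rewrite he hg /= => h1 h2; by move: (anti _ _ h1); rewrite h2.
Qed.

Lemma sgn_star_end e u w : adjE u w e -> u != w ->
  [/\ sgn (Cstar D w) e != 0%R, sgn (Cstar D u) e = (- sgn (Cstar D w) e)%R &
      forall x, x != u -> x != w -> sgn (Cstar D x) e = 0%R].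
Proof.
move=> /orP[]/eqP h uw; have wu : w != u by rewrite eq_sym.
all: rewrite /sgn /Cstar /= !inE h /= !eqxx ?(negbTE uw) ?(negbTE wu) /=;
  split => // x xu xw; by rewrite !inE h /= ?(eq_sym w) ?(negbTE xw) ?(eq_sym u) ?(negbTE xu).
Qed.

Lemma no_cycle (HD : simple_digraph D) (F : {set dedge}) (HF : acyclic F) g u w :
  g \in F -> adjE u w g -> ~~ connect (adjK (F :\ g)) u w.
Proof.
move=> gF ag.
have uw : u != w.
  apply/eqP => h; move: ag; rewrite /adjE h orbb => /eqP hg; have := valP g.
  by rewrite hg /=; case: HD => irr _; rewrite irr.
apply/negP => /connectP[p pth lastp]; move: lastp.
case: (shortenP pth) => p' pth' uq _ lastp'.
move: pth' lastp' uq; case: p' => [|y [|y2 p'']].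
- by move=> _ /= h; move: uw; rewrite h eqxx.
- move=> /= /andP[/existsP[e /andP[eF ae]] _] h; move: eF; rewrite -h in ae.
  by rewrite (edge_uniq HD ae ag) !inE eqxx.
move=> pth' lastp' uq; move/negP: (HF [:: u, y, y2 & p''] isT uq); apply.
have -> : cycle (adjK F) [:: u, y, y2 & p''] = path (adjK F) u (rcons [:: y, y2 & p''] u) by [].
rewrite rcons_path; apply/andP; split.
  by apply: sub_path pth'; apply: adjK_mono; apply: subD1set.
rewrite -lastp'; apply/existsP; exists g; rewrite gF /adjE orbC; exact: ag.
Qed.


Section Tree.
Variables (HD : simple_digraph D) (F : {set dedge}) (HF : spanning_tree F)
  (r : V) (d0 : dedge).

Definition Inv (s0 : seq V) (fs : seq dedge) :=
  [/\ uniq (r :: s0), uniq fs, size fs = size s0, all (mem F) fs &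
   (forall j, j < size fs -> exists2 k, k <= j &
       adjE (nth r (r :: s0) k) (nth r (r :: s0) j.+1) (nth d0 fs j)) /\
   (forall x, x \in r :: s0 -> connect (adjK [set e in fs]) r x)].

Lemma adjE_mem e a b : adjE a b e -> ((val e).1 \in [:: a; b]) && ((val e).2 \in [:: a; b]).
Proof. by move=> /orP[]/eqP->; rewrite /= !inE !eqxx ?orbT. Qed.

Lemma endpoints_in s0 fs e : Inv s0 fs -> e \in fs ->
  ((val e).1 \in r :: s0) && ((val e).2 \in r :: s0).
Proof.
move=> [uq ufs sz allF [adj con]] efs.
have jl : index e fs < size fs by rewrite index_mem.
have [k kj] := adj _ jl; rewrite nth_index //.
move=> /adjE_mem /andP[h1 h2].
have m1 : nth r (r :: s0) k \in r :: s0 by apply: mem_nth; rewrite /= -sz; lia.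
have m2 : nth r (r :: s0) (index e fs).+1 \in r :: s0.
  by apply: mem_nth; rewrite /= -sz; lia.
move: h1 h2; rewrite !mem_seq2 => /orP[]/eqP-> /orP[]/eqP->; by rewrite ?m1 ?m2.
Qed.

Lemma step s0 fs : Inv s0 fs -> size (r :: s0) < #|V| ->
  exists z g, Inv (rcons s0 z) (rcons fs g).
Proof.
move=> I; have [uq ufs sz allF [adj con]] := I; move=> lt.
have [x xn] : exists x, x \notin r :: s0.
  case: (pickP (fun x => x \notin r :: s0)) => [x xn|H]; first by exists x.
  have : #|V| <= #|r :: s0|.
    apply: subset_leq_card; apply/subsetP => y _; move: (H y) => /= /negbFE.
    by [].
  have := card_size (r :: s0); lia.
have [[y z] /= /and3P[ys zn yz]] : exists p : V * V,
    [&& p.1 \in r :: s0, p.2 \notin r :: s0 & adjK F p.1 p.2].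
  case: (pickP (fun p : V * V => [&& p.1 \in r :: s0, p.2 \notin r :: s0 & adjK F p.1 p.2]))
    => [p H|H]; first by exists p.
  have cl : closed (adjK F) (mem (r :: s0)).
    apply: intro_closed; first by apply: sym_connect_sym; apply: adjK_sym.
    move=> a b ab ain; apply/negPn/negP => bn; move: (H (a, b)).
    by rewrite /= ain bn ab.
  have := closed_connect cl (HF.1 r x); rewrite !inE eqxx /= => h.
  by move: xn; rewrite inE -h.
case/existsP: yz => g /andP[gF ag].
exists z, g.
have gn : g \notin fs.
  apply/negP => gfs; have := endpoints_in I gfs.
  move: ag => /orP[]/eqP-> /=; by rewrite (negbTE zn) ?andbF.
split.
- by rewrite -rcons_cons rcons_uniq zn uq.
- by rewrite rcons_uniq gn ufs.
- by rewrite !size_rcons sz.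
- by rewrite all_rcons allF andbT; exact: gF.
split.
  move=> j; rewrite size_rcons ltnS leq_eqVlt => /orP[/eqP ->|jl].
    exists (index y (r :: s0)).
      by rewrite sz -ltnS; have := index_mem y (r :: s0); rewrite ys /=.
    rewrite -rcons_cons !nth_rcons index_mem ys nth_index // ltnn eqxx.
    by rewrite /= sz ltnn eqxx.
  have [k kj h] := adj j jl; exists k => //.
  rewrite -rcons_cons !nth_rcons jl.
  have -> : j.+1 < size (r :: s0) by rewrite /= ltnS -sz.
  have -> : k < size (r :: s0) by rewrite /= -sz; lia.
  exact: h.
have mono : subrel (connect (adjK [set e in fs])) (connect (adjK [set e in rcons fs g])).
  apply: connect_sub => a b ab; apply: connect1; move: ab; apply: adjK_mono.
  by apply/subsetP => e; rewrite !inE mem_rcons inE => ->; rewrite orbT.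
move=> a; rewrite -rcons_cons mem_rcons inE => /orP[/eqP->|ain]; last by apply: mono; apply: con.
apply: connect_trans (mono _ _ (con y ys)) _; apply: connect1.
apply/existsP; exists g; by rewrite inE mem_rcons inE eqxx.
Qed.

Lemma build n : forall s0 fs, Inv s0 fs -> size (r :: s0) + n = #|V| ->
  exists s0' fs', Inv s0' fs' /\ size (r :: s0') = #|V|.
Proof.
elim: n => [|n IH] s0 fs I sz; first by exists s0, fs; rewrite -sz addn0.
have lt : size (r :: s0) < #|V| by rewrite -sz; lia.
have [z [g I']] := step I lt.
by apply: (IH _ _ I'); rewrite /= size_rcons -sz /=; lia.
Qed.

Lemma final s0 fs : Inv s0 fs -> size (r :: s0) = #|V| ->
  (forall x, x \in r :: s0) /\ [set x in fs] = F.
Proof.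
move=> [uq ufs sz allF [adj con]] szV.
have cov : forall x, x \in r :: s0.
  move=> x; apply/negPn/negP => xn.
  have : uniq (x :: r :: s0) by rewrite cons_uniq xn uq.
  move/card_uniqP; have := max_card (mem (x :: r :: s0)).
  move=> h1 h2; move: h1; rewrite h2 /= -szV /=; lia.
split => //; apply/setP => g; rewrite inE; apply/idP/idP => [gfs|gF].
  exact: (allP allF).
apply/negPn/negP => gn.
have ag : adjE (val g).1 (val g).2 g by rewrite /adjE -surjective_pairing eqxx.
have := no_cycle HD HF.2 gF ag; apply/negP/negPn.
have c : connect (adjK [set e in fs]) (val g).1 (val g).2.
  apply: connect_trans (con _ (cov _)).
  by rewrite (sym_connect_sym (adjK_sym _)); apply: con.
move: c; apply: connect_sub => a b ab; apply: connect1; move: ab; apply: adjK_mono.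
apply/subsetP => e; rewrite !inE => efs; have eF : e \in F := allP allF e efs; rewrite eF andbT.
by apply/eqP => h; move: gn; rewrite -h efs.
Qed.
End Tree.
End S.

Theorem mainTheorem16 (V : finType) (D : rel V)
  (HD : simple_digraph D) (Hcubic : cubic D)
  (F : {set dedge D}) (HF : spanning_tree F)
  (lt : rel (dedge D)) (Hlt : strict_total_order lt)
  (A : {set sset D}) (HT : twisted_graph lt A) :
  positive_sequence A F.
Proof.
have Ach := A_char HD Hcubic Hlt HT.
case: (pickP (@predT V)) => [r _|V0]; last first.
  exists [::], [::]; split => //.
  - split => //; apply/setP => X; rewrite inE; apply/esym/negP => /Ach[v _].
    by move: (V0 v).
  - split => //; apply/setP => e; rewrite inE; by move: (V0 (val e).1).
  - by case.
have : 0 < #|inc D r| by rewrite /inc (Hcubic r).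
case/card_gt0P => d0 _.
have V1 : 0 < #|V| by apply/card_gt0P; exists r.
have I0 : Inv F r d0 [::] [::].
  split => //; split => // x; rewrite inE => /eqP->; exact: connect0.
have e0 : size (r :: [::]) + (#|V| - 1) = #|V|.
  exact: subnKC V1.
have [s0 [fs [I szV]]] := build HF I0 e0.
have [cov Fset] := final HD HF I szV.
case: I => uq ufs sz allF [adj con].
exists (map (Cstar D) (r :: s0)), fs; split.
- split; first by rewrite (map_inj_uniq (Cstar_inj Hcubic)).
  apply/setP => X; rewrite inE; apply/idP/idP.
    by case/mapP => v _ ->; apply/Ach; exists v.
  by move/Ach => [v ->]; apply/mapP; exists v.
- by [].
- by rewrite size_map /= sz.
move=> j; rewrite (tnth_nth d0) /=.
rewrite -[Cstar D r :: _]/(map (Cstar D) (r :: s0)).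
have jl : j < size fs := ltn_ord j.
have [k kj ae] := adj j jl.
set S := r :: s0.
have jS : j.+1 < size S by rewrite /= ltnS -sz.
have kS : k < size S by rewrite /= -sz; lia.
have uw : nth r S k != nth r S j.+1.
  by rewrite nth_uniq //; apply/eqP => h; move: kj; rewrite h; lia.
have [nz opp oth] := sgn_star_end ae uw.
rewrite (nth_map r) //; split => // i.
  move=> /andP[ji iS]; rewrite size_map in iS; rewrite (nth_map r) //.
  apply: oth; rewrite nth_uniq //; apply/eqP => h.
    by move: (leq_ltn_trans kj (ltnW ji)); rewrite h ltnn.
  by move: ji; rewrite h ltnn.
move=> ij; have iS : i < size S by apply: leq_trans ij (ltnW jS).
rewrite (nth_map r) //.
case: (eqVneq (nth r S i) (nth r S k)) => [->|iu]; first by rewrite opp !inE eqxx orbT.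
rewrite oth // ?inE ?eqxx //.
by rewrite nth_uniq //; apply/eqP => h; move: ij; rewrite h ltnn.
Qed.
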